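(* Let $\vec G_0$ be a directed graph with Eulerian Laplacian $\mathbf{L}_{\vec G_0}$, let $\beta>0$, and let $\vec G_1 = \mathcal{U}^{(\beta)}(\vec G_0)$ be its $\beta$-partial-symmetrization. Then $\mathbf{L}_{\vec G_1}^+$ is a $\big(1-\frac{1}{1+\beta}\big)$-approximate pseudoinverse of $\mathbf{L}_{\vec G_0}$ with respect to $\mathbf{U}_{\mathbf{L}_{\vec G_1}}$.
   Context: For a weighted directed graph $\vec G$ with adjacency matrix $\mathbf{A}_{\vec G}(i,j)=\omega((i,j))$ and diagonal out-degree matrix $\mathbf{D}_{\vec G}$, $\mathbf{L}_{\vec G}=\mathbf{D}_{\vec G}-\mathbf{A}_{\vec G}^T$; it is Eulerian if $\mathbf{L}_{\vec G}\mathbf{1}=\mathbf{0}$. The undirectification $\mathcal{U}(\vec G)$ is the undirected graph with edge $\{u,v\}$ of weight $\frac12(\omega(u,v)+\omega(v,u))$ (with $\omega=0$ for non-edges), viewed as a directed graph with both orientations. The $\beta$-partial-symmetrization is $\mathcal{U}^{(\beta)}(\vec G)=\beta\cdot\mathcal{U}(\vec G)+\vec G$, so $\mathbf{L}_{\mathcal{U}^{(\beta)}(\vec G)}=\beta\mathbf{U}_{\mathbf{L}_{\vec G}}+\mathbf{L}_{\vec G}$, where $\mathbf{U}_{\mathbf{M}}=\frac12(\mathbf{M}+\mathbf{M}^T)$. For PSD $\mathbf{H}$, $\|\mathbf{M}\|_{\mathbf{H}\to\mathbf{H}}=\max_{\mathbf{x}\neq0}\|\mathbf{M}\mathbf{x}\|_{\mathbf{H}}/\|\mathbf{x}\|_{\mathbf{H}}$,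 $\|\mathbf{x}\|_{\mathbf{H}}=\sqrt{\mathbf{x}^T\mathbf{H}\mathbf{x}}$. $\mathbf{Z}$ is an $\epsilon$-approximate pseudoinverse of $\mathbf{M}$ with respect to PSD $\mathbf{U}$ if $\ker(\mathbf{U})\subseteq\ker(\mathbf{M})=\ker(\mathbf{M}^T)=\ker(\mathbf{Z})=\ker(\mathbf{Z}^T)$ and $\|\mathbf{I}_{\operatorname{im}(\mathbf{M})}-\mathbf{Z}\mathbf{M}\|_{\mathbf{U}\to\mathbf{U}}\le\epsilon$. *)

(* Defs.v *)
From HB Require Import structures.
From mathcomp Require Import all_boot all_order all_algebra.
Set Implicit Arguments. Unset Strict Implicit. Unset Printing Implicit Defensive.
Import Order.TTheory GRing.Theory Num.Theory.
Local Open Scope ring_scope.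

Section Defs.
Variables (R : rcfType) (n : nat).

(* A weighted directed graph on vertex set 'I_n is given by its weight
   function w : 'M_n, with w i j = omega((i,j)) >= 0 (0 for non-edges).
   Its adjacency matrix is A(i,j) = w i j. *)
Definition adjacency (w : 'M[R]_n) : 'M[R]_n := w.

Definition outdeg (w : 'M[R]_n) : 'M[R]_n :=
  \matrix_(i, j) (if i == j then \sum_(k < n) w i k else 0).

Definition dlap (w : 'M[R]_n) : 'M[R]_n := outdeg w - (adjacency w)^T.

Definition eulerian (w : 'M[R]_n) : Prop :=
  dlap w *m (const_mx 1 : 'cV[R]_n) = 0.

Definition undirectify (w : 'M[R]_n) : 'M[R]_n :=
  \matrix_(i, j) ((w i j + w j i) / 2%:R).

Definition partial_symm (beta : R) (w : 'M[R]_n) : 'M[R]_n :=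
  beta *: undirectify w + w.

Definition symm_part (M : 'M[R]_n) : 'M[R]_n := 2%:R^-1 *: (M + M^T).

Definition hnorm (H : 'M[R]_n) (x : 'cV[R]_n) : R :=
  Num.sqrt ((x^T *m H *m x) ord0 ord0).

(* ||M||_{H->H} <= eps, i.e. max_{x<>0} ||Mx||_H/||x||_H <= eps, unfolded as
   ||Mx||_H <= eps ||x||_H for all x. *)
Definition opnorm_le (H M : 'M[R]_n) (eps : R) : Prop :=
  forall x : 'cV[R]_n, hnorm H (M *m x) <= eps * hnorm H x.

(* P is the orthogonal projection I_{im(M)} onto the column space of M *)
Definition is_orth_proj_im (P M : 'M[R]_n) : Prop :=
  P^T = P /\ P *m P = P /\ (P^T == M^T)%MS.

Definition in_ker (M : 'M[R]_n) (x : 'cV[R]_n) : Prop := M *m x = 0.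

Definition approx_pinv (eps : R) (Z M U : 'M[R]_n) : Prop :=
  (forall x, in_ker U x -> in_ker M x) /\
  (forall x, in_ker M x <-> in_ker M^T x) /\
  (forall x, in_ker M x <-> in_ker Z x) /\
  (forall x, in_ker M x <-> in_ker Z^T x) /\
  (forall P, is_orth_proj_im P M -> opnorm_le U (P - Z *m M) eps).

Definition is_mp_pinv (Z M : 'M[R]_n) : Prop :=
  M *m Z *m M = M /\ Z *m M *m Z = Z /\
  (M *m Z)^T = M *m Z /\ (Z *m M)^T = Z *m M.

End Defs.

(* Main.v *)
Require Import Defs.
From HB Require Import structures.
From mathcomp Require Import all_boot all_order all_algebra ring lra.
Set Implicit Arguments.
Import Order.TTheory GRing.Theory Num.Theory.
Local Open Scope ring_scope.

Section Gen.
Variables (R : rcfType) (n : nat).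
Implicit Types (A B M : 'M[R]_n) (x y : 'cV[R]_n) (w : 'M[R]_n).

Definition Qf M x : R := (x^T *m M *m x) ord0 ord0.

Lemma mx_ext A B : (forall x, A *m x = B *m x) -> A = B.
Proof.
move=> H; apply/matrixP => i j.
have := congr1 (fun v : 'cV[R]_n => v i ord0) (H (delta_mx j 0)).
by rewrite -!colE !mxE.
Qed.

Lemma Qf_tr M x : Qf M^T x = Qf M x.
Proof.
rewrite /Qf; have -> : x^T *m M^T *m x = (x^T *m M *m x)^T.
  by rewrite !trmx_mul trmxK mulmxA.
by rewrite mxE.
Qed.

Lemma Qf_add M N x : Qf (M + N) x = Qf M x + Qf N x.
Proof. by rewrite /Qf mulmxDr mulmxDl mxE. Qed.

Lemma Qf_scale a M x : Qf (a *: M) x = a * Qf M x.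
Proof. by rewrite /Qf -scalemxAr -scalemxAl mxE. Qed.

Lemma Qf_symm M x : Qf (symm_part M) x = Qf M x.
Proof.
rewrite /symm_part Qf_scale Qf_add Qf_tr.
by field.
Qed.

Lemma symm_partT M : (symm_part M)^T = symm_part M.
Proof. by rewrite /symm_part linearZ /= linearD /= trmxK addrC. Qed.

Lemma Qf_sum M x : Qf M x = \sum_i x i ord0 * (M *m x) i ord0.
Proof. by rewrite /Qf -mulmxA mxE; apply: eq_bigr => i _; rewrite mxE. Qed.

Lemma sum_delta (i : 'I_n) (f : 'I_n -> R) :
  \sum_j (if i == j then f j else 0) = f i.
Proof.
rewrite (bigD1 i) //= eqxx big1 ?addr0 // => j /negbTE.
by rewrite eq_sym => ->.
Qed.

Lemma dlapT_mulE w x i :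
  ((dlap w)^T *m x) i ord0 = \sum_j w i j * (x i ord0 - x j ord0).
Proof.
rewrite mxE.
under eq_bigr do rewrite !mxE.
under [RHS]eq_bigr do rewrite mulrBr.
rewrite sumrB.
under eq_bigr do rewrite mulrBl.
rewrite sumrB; congr (_ - _).
under eq_bigr => j _ do rewrite (fun_if (fun v => v * x j ord0)) mul0r eq_sym.
by rewrite (sum_delta i (fun j => (\sum_k w j k) * x j ord0)) mulr_suml.
Qed.

Lemma eul_sum w : eulerian w -> forall i, \sum_k w k i = \sum_k w i k.
Proof.
move=> /matrixP H i; move: (H i ord0); rewrite !mxE.
under eq_bigr do rewrite !mxE mulr1.
rewrite sumrB.
rewrite /adjacency (sum_delta i (fun j => \sum_k w i k)) => /eqP; rewrite subr_eq0 => /eqP.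
by [].
Qed.

Lemma dlap_mulE w x i : eulerian w ->
  (dlap w *m x) i ord0 = \sum_j w j i * (x i ord0 - x j ord0).
Proof.
move=> /eul_sum E; rewrite mxE.
under eq_bigr do rewrite !mxE.
under [RHS]eq_bigr do rewrite mulrBr.
rewrite sumrB.
under eq_bigr do rewrite mulrBl.
rewrite sumrB; congr (_ - _).
under eq_bigr => j _ do rewrite (fun_if (fun v => v * x j ord0)) mul0r.
rewrite (sum_delta i (fun j => (\sum_k w i k) * x j ord0)) -E mulr_suml.
by [].
Qed.

Lemma Qf_dlap w x : eulerian w ->
  Qf (dlap w) x *+ 2 = \sum_i \sum_j w i j * (x i ord0 - x j ord0) ^+ 2.
Proof.
move=> E.
rewrite mulr2n -{1}Qf_tr !Qf_sum.
under eq_bigr do rewrite dlapT_mulE big_distrr.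
under [X in _ + X]eq_bigr do rewrite dlap_mulE // big_distrr.
rewrite [X in _ + X]exchange_big -big_split; apply: eq_bigr => i _.
rewrite -big_split; apply: eq_bigr => j _ /=.
ring.
Qed.

Lemma Qf_dlap_ge0 w x : eulerian w -> (forall i j, 0 <= w i j) -> 0 <= Qf (dlap w) x.
Proof.
move=> E hw.
have : 0 <= Qf (dlap w) x *+ 2.
  rewrite Qf_dlap //; apply: sumr_ge0 => i _; apply: sumr_ge0 => j _.
  by apply: mulr_ge0 => //; apply: sqr_ge0.
by rewrite pmulrn_lge0.
Qed.

Lemma Qf_dlap_eq0 w x : eulerian w -> (forall i j, 0 <= w i j) ->
  Qf (dlap w) x = 0 -> forall i j, w i j * (x i ord0 - x j ord0) = 0.
Proof.
move=> E hw Q0 i j.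
have S0 : \sum_i \sum_j w i j * (x i ord0 - x j ord0) ^+ 2 = 0.
  by rewrite -Qf_dlap // Q0 mul0rn.
have T : forall i j, 0 <= w i j * (x i ord0 - x j ord0) ^+ 2.
  by move=> i' j'; apply: mulr_ge0 => //; apply: sqr_ge0.
have Hi : \sum_j w i j * (x i ord0 - x j ord0) ^+ 2 = 0.
  apply: (psumr_eq0P _ S0) => // i' _; apply: sumr_ge0 => j' _; apply: T.
have := (psumr_eq0P (fun j' _ => T i j') Hi) j isT.
move/eqP; rewrite mulf_eq0 => /orP [/eqP -> | ]; first by rewrite mul0r.
by rewrite sqrf_eq0 => /eqP ->; rewrite mulr0.
Qed.

Lemma ker_dlap w x : eulerian w -> (forall i j, 0 <= w i j) ->
  Qf (dlap w) x = 0 -> dlap w *m x = 0 /\ (dlap w)^T *m x = 0.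
Proof.
move=> E hw Q0; have H := (@Qf_dlap_eq0 w x E hw Q0).
split; apply/matrixP => i k; rewrite (ord1 k) [RHS]mxE.
  by rewrite dlap_mulE // big1 // => j _; rewrite -opprB mulrN H oppr0.
by rewrite dlapT_mulE // big1 // => j _; rewrite H.
Qed.

Lemma dlap_ps w beta : eulerian w ->
  dlap (partial_symm beta w) = beta *: symm_part (dlap w) + dlap w.
Proof.
move=> /eul_sum E; apply/matrixP => i j.
rewrite /dlap /partial_symm /symm_part /outdeg /adjacency /undirectify !mxE.
case: (eqVneq i j) => [<-|ij].
  rewrite (eq_bigr (fun k => beta * ((w i k + w k i)/2) + w i k)); last first.
    by move=> k _; rewrite !mxE.
  rewrite (@big_split R 0 +%R) /= -mulr_sumr -mulr_suml (@big_split R 0 +%R) /= E.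
  by field.
by field.
Qed.

Lemma QfK M x : M *m x = 0 -> Qf M x = 0.
Proof. by move=> H; rewrite /Qf -mulmxA H mulmx0 mxE. Qed.

Lemma Qf_vscale a M x : Qf M (a *: x) = a ^+ 2 * Qf M x.
Proof.
by rewrite /Qf linearZ /= linearZ /= -!scalemxAl !mxE mulrA expr2.
Qed.

Lemma Qf_sub M a b : M^T = M ->
  Qf M (a - b) = Qf M a - 2 * (a^T *m M *m b) ord0 ord0 + Qf M b.
Proof.
move=> MT.
have E : b^T *m M *m a = (a^T *m M *m b)^T.
  by rewrite !trmx_mul trmxK MT mulmxA.
rewrite /Qf linearB /= linearB /= !mulmxBl E.
set p := a^T *m M *m a; set q := a^T *m M *m b; set r := b^T *m M *m b.
rewrite !mxE.
ring.
Qed.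
End Gen.
Arguments Qf {R n}.
Arguments mx_ext {R n}.
Arguments Qf_tr {R n}.
Arguments Qf_add {R n}.
Arguments Qf_scale {R n}.
Arguments Qf_symm {R n}.
Arguments symm_partT {R n}.
Arguments Qf_sum {R n}.
Arguments sum_delta {R n}.
Arguments dlapT_mulE {R n}.
Arguments eul_sum {R n}.
Arguments dlap_mulE {R n}.
Arguments Qf_dlap {R n}.
Arguments Qf_dlap_ge0 {R n}.
Arguments Qf_dlap_eq0 {R n}.
Arguments ker_dlap {R n}.
Arguments dlap_ps {R n}.
Arguments QfK {R n M x}.
Arguments Qf_vscale {R n}.
Arguments Qf_sub {R n}.

Theorem lemma4p6 (R : rcfType) (n : nat) (w0 : 'M[R]_n)
  (hw : forall i j, 0 <= w0 i j) (heul : eulerian w0)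
  (beta : R) (hbeta : 0 < beta) (L1pinv : 'M[R]_n) :
  is_mp_pinv L1pinv (dlap (partial_symm beta w0)) ->
  approx_pinv (1 - 1 / (1 + beta)) L1pinv (dlap w0)
    (symm_part (dlap (partial_symm beta w0))).
Proof.
move=> [mp1 [mp2 [mp3 mp4]]].
have L1E := dlap_ps w0 beta heul.
set L0 := dlap w0 in L1E *.
set L1 := dlap (partial_symm beta w0) in mp1 mp2 mp3 mp4 L1E *.
set Z := L1pinv in mp1 mp2 mp3 mp4 *.
set U0 := symm_part L0 in L1E.
set U := symm_part L1.
have b0 : 0 < 1 + beta by lra.
have b1 : 1 + beta != 0 by rewrite gt_eqF.
have U0T : U0^T = U0 := symm_partT L0.
have UT : U^T = U := symm_partT L1.
have UE : U = (1 + beta) *: U0.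
  rewrite /U /U0 /symm_part L1E; apply/matrixP => i j; rewrite !mxE; by field.
have qL1 : forall x : 'cV[R]_n, Qf L1 x = (1 + beta) * Qf L0 x.
  by move=> x; rewrite L1E Qf_add Qf_scale Qf_symm; ring.
have qU : forall x : 'cV[R]_n, Qf U x = (1 + beta) * Qf L0 x.
  by move=> x; rewrite Qf_symm qL1.
have kerQ : forall x : 'cV[R]_n, Qf L0 x = 0 -> L0 *m x = 0 /\ L0^T *m x = 0.
  by move=> x; apply: ker_dlap.
have k0 : forall x : 'cV[R]_n, L0 *m x = 0 -> L0^T *m x = 0.
  by move=> x H; case: (kerQ x (QfK H)).
have k0' : forall x : 'cV[R]_n, L0^T *m x = 0 -> L0 *m x = 0.
  by move=> x H; have := QfK H; rewrite Qf_tr => /kerQ [].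
have kU0 : forall x : 'cV[R]_n, L0 *m x = 0 -> U0 *m x = 0.
  move=> x H; rewrite /U0 /symm_part -scalemxAl mulmxDl H (k0 _ H) addr0.
  by rewrite scaler0.
have k01 : forall x : 'cV[R]_n, L0 *m x = 0 -> L1 *m x = 0.
  by move=> x H; rewrite L1E mulmxDl -scalemxAl kU0 // H scaler0 addr0.
have k01T : forall x : 'cV[R]_n, L0 *m x = 0 -> L1^T *m x = 0.
  move=> x H; rewrite L1E linearD linearZ /= U0T mulmxDl -scalemxAl kU0 //.
  by rewrite k0 // scaler0 addr0.
have kU : forall x : 'cV[R]_n, L0 *m x = 0 -> U *m x = 0.
  by move=> x H; rewrite UE -scalemxAl kU0 // scaler0.
have k10 : forall x : 'cV[R]_n, L1 *m x = 0 -> L0 *m x = 0.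
  move=> x H; have := QfK H; rewrite qL1 => /eqP; rewrite mulf_eq0 (negbTE b1) /=.
  by move=> /eqP /kerQ [].
have k10T : forall x : 'cV[R]_n, L1^T *m x = 0 -> L0 *m x = 0.
  move=> x H; have := QfK H; rewrite Qf_tr qL1 => /eqP; rewrite mulf_eq0 (negbTE b1) /=.
  by move=> /eqP /kerQ [].
have kU1 : forall x : 'cV[R]_n, U *m x = 0 -> L0 *m x = 0.
  move=> x H; have := QfK H; rewrite qU => /eqP; rewrite mulf_eq0 (negbTE b1) /=.
  by move=> /eqP /kerQ [].
have kZ : forall x : 'cV[R]_n, Z *m x = 0 <-> L1^T *m x = 0.
  move=> x; split=> H.
    have -> : L1^T *m x = L1^T *m (L1 *m Z)^T *m x.
      by rewrite -[in LHS]mp1 trmx_mul.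
    by rewrite mp3 -!mulmxA H !mulmx0.
  have -> : Z *m x = Z *m (L1 *m Z)^T *m x by rewrite mp3 mulmxA mp2.
  by rewrite trmx_mul -!mulmxA H !mulmx0.
have kZT : forall x : 'cV[R]_n, Z^T *m x = 0 <-> L1 *m x = 0.
  move=> x; split=> H.
    have -> : L1 *m x = L1 *m (Z *m L1)^T *m x by rewrite mp4 mulmxA mp1.
    by rewrite trmx_mul -!mulmxA H !mulmx0.
  have -> : Z^T *m x = (Z *m L1 *m Z)^T *m x by rewrite mp2.
  by rewrite trmx_mul mp4 -!mulmxA H !mulmx0.
split; first by move=> x /kU1.
split; first by move=> x; split; [exact: k0 | exact: k0'].
split.
  move=> x; split; first by move=> /k01T /kZ.
  by move=> /kZ /k10T.
split.
  move=> x; split; first by move=> /k01 /kZT.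
  by move=> /kZT /k10.
move=> P [PT [PP /andP [s1 s2]]].
move/submxP: s1 => [D1 HD1]; move/submxP: s2 => [D2 HD2].
have kP : forall x : 'cV[R]_n, P *m x = 0 -> L0^T *m x = 0.
  by move=> x H; rewrite HD2 -mulmxA PT H mulmx0.
have kP' : forall x : 'cV[R]_n, L0^T *m x = 0 -> P *m x = 0.
  by move=> x H; rewrite -PT HD1 -mulmxA H mulmx0.
have PQ : P = P *m (Z *m L1).
  apply: mx_ext => y.
  have H1 : L1 *m (y - Z *m L1 *m y) = 0.
    by rewrite mulmxBr !mulmxA mp1 subrr.
  have := kP' _ (k0 _ (k10 _ H1)).
  rewrite mulmxBr => /eqP; rewrite subr_eq0 => /eqP ->; by rewrite !mulmxA.
have QP : Z *m L1 = Z *m L1 *m P.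
  apply: mx_ext => y.
  have H1 : P *m (y - P *m y) = 0 by rewrite mulmxBr mulmxA PP subrr.
  have := k01 _ (k0' _ (kP _ H1)).
  move=> H2; have : Z *m L1 *m (y - P *m y) = 0 by rewrite -mulmxA H2 mulmx0.
  rewrite mulmxBr => /eqP; rewrite subr_eq0 => /eqP ->; by rewrite !mulmxA.
have PeQ : P = Z *m L1.
  by rewrite -PT PQ trmx_mul PT mp4 -QP.
have L1ZU : L1 *m Z *m U = U.
  have UL : U *m (L1 *m Z) = U.
    apply: mx_ext => y.
    have H1 : Z *m (y - L1 *m Z *m y) = 0 by rewrite mulmxBr !mulmxA mp2 subrr.
    have := kU _ (k10T _ (proj1 (kZ _) H1)).
    rewrite mulmxBr => /eqP; rewrite subr_eq0 => /eqP ->; by rewrite !mulmxA.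
  by have := congr1 trmx UL; rewrite trmx_mul mp3 UT.
have Ediff : P - Z *m L0 = (beta / (1 + beta)) *: (Z *m U).
  have L0E : L0 = L1 - (beta / (1 + beta)) *: U.
    by rewrite UE scalerA divfK // L1E addrAC subrr add0r.
  rewrite PeQ L0E [Z *m (L1 - _)]mulmxBr opprB addrC subrK.
  by rewrite scalemxAr.
move=> x; rewrite Ediff -scalemxAl.
have -> : 1 - 1 / (1 + beta) = beta / (1 + beta) by field.
set c := beta / (1 + beta).
set v := Z *m U *m x.
have c0 : 0 <= c by rewrite /c divr_ge0 // ltW.
have hn : forall y, hnorm U y = Num.sqrt (Qf U y) by [].
rewrite !hn Qf_vscale sqrtrM ?sqr_ge0 // sqrtr_sqr ger0_norm //.
apply: ler_wpM2l => //; apply: ler_wsqrtr.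
have Lv : L1 *m v = U *m x by rewrite /v !mulmxA L1ZU.
have e1 : Qf U v = (v^T *m U *m x) ord0 ord0.
  have -> : Qf U v = Qf L1 v := Qf_symm L1 v.
  by rewrite /Qf -mulmxA Lv mulmxA.
have e2 := Qf_sub U v x UT.
have psd : 0 <= Qf U (v - x).
  rewrite qU; apply: mulr_ge0; first exact: ltW.
  exact: Qf_dlap_ge0.
lra.
Qed.
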